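(* Let $U\subset\mathbb R^n$ be a smooth bounded domain and $H:\mathbb R^n\to\mathbb R$ satisfy: $H$ smooth with $H(0)<0$; $\lim_{|p|\to\infty}H(p)/|p|=\infty$; and there exist $\gamma,\delta>0$ with $DH(p)\cdot p-\gamma H(p)\ge\delta$ for all $p\in\mathbb R^n$. Let $\epsilon>0$. If $u$ and $v$ are (classical) solutions of $H(Dw)=\epsilon\Delta w$ in $U$, $w=0$ on $\partial U$, then $u=v$. *)

(* Defs.v *)
From HB Require Import structures.
From mathcomp Require Import all_boot all_order all_algebra.
From mathcomp Require Import all_classical all_reals all_analysis.
Set Implicit Arguments. Unset Strict Implicit. Unset Printing Implicit Defensive.
Import Order.TTheory GRing.Theory Num.Theory.
Import numFieldNormedType.Exports.
Local Open Scope classical_set_scope.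
Local Open Scope ring_scope.

Section Defs.
Variable R : realType.

Fixpoint Ck_on {V : normedModType R} (k : nat) (A : set V) (f : V -> R) : Prop :=
  match k with
  | 0 => forall x, A x -> {for x, continuous f}
  | k'.+1 => (forall x, A x -> differentiable f x) /\
             (forall v : V, Ck_on k' A ('D_v f))
  end.

Definition smooth {V : normedModType R} (f : V -> R) : Prop :=
  forall k, Ck_on k setT f.

Definition dotv {n : nat} (p q : 'rV[R]_n) : R := \sum_(i < n) p 0 i * q 0 i.
Definition enorm {n : nat} (p : 'rV[R]_n) : R := Num.sqrt (dotv p p).

Definition evec {n : nat} (i : 'I_n) : 'rV[R]_n := delta_mx 0 i.

Definition grad {n : nat} (w : 'rV[R]_n -> R) (x : 'rV[R]_n) : 'rV[R]_n :=
  \row_(i < n) 'D_(evec i) w x.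

Definition lap {n : nat} (w : 'rV[R]_n -> R) (x : 'rV[R]_n) : R :=
  \sum_(i < n) 'D_(evec i) ('D_(evec i) w) x.

(* Smooth (C^infinity) boundary, in dimension n = 1 + m (Evans' definition):
   for every boundary point x0 there are r > 0, a rigid change of coordinates
   y = (x - x0) Q with Q orthogonal, and a smooth gamma : R^m -> R such that
   inside the Euclidean ball B(x0, r), U is the region strictly above the
   graph of gamma:  y_1 > gamma(y_2, ..., y_n). *)
Definition smooth_boundary {m : nat} (U : set 'rV[R]_(1 + m)) : Prop :=
  forall x0, closure U x0 -> ~ U x0 ->
  exists r : R, 0 < r /\
  exists Q : 'M[R]_(1 + m), Q *m Q^T = 1%:M /\
  exists gam : 'rV[R]_m -> R, smooth gam /\
  forall x : 'rV[R]_(1 + m), enorm (x - x0) < r ->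
    (U x <-> let y := (x - x0) *m Q in
             gam (@rsubmx R 1 1 m y) < y 0 0).

Definition smooth_bounded_domain {m : nat} (U : set 'rV[R]_(1 + m)) : Prop :=
  open U /\ connected U /\ (exists M : R, forall x, U x -> enorm x <= M)
  /\ smooth_boundary U.

Definition superlinear {n : nat} (H : 'rV[R]_n -> R) : Prop :=
  forall M : R, exists R0 : R, forall p, R0 < enorm p -> M < H p / enorm p.

Definition classical_solution {m : nat} (U : set 'rV[R]_(1 + m))
    (H : 'rV[R]_(1 + m) -> R) (eps : R) (w : 'rV[R]_(1 + m) -> R) : Prop :=
  Ck_on 2 U w /\
  {within closure U, continuous w} /\
  (forall x, U x -> H (grad w x) = eps * lap w x) /\
  (forall x, closure U x -> ~ U x -> w x = 0).

End Defs.

(* Main.v *)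
Require Import Defs.
From HB Require Import structures.
From mathcomp Require Import all_boot all_order all_algebra.
From mathcomp Require Import all_classical all_reals all_analysis.
From mathcomp Require Import ring lra.
Import Order.TTheory GRing.Theory Num.Theory.
Import numFieldNormedType.Exports.
Local Open Scope classical_set_scope.
Local Open Scope ring_scope.

Section Aux.
Variable R : realType.

Lemma line_derive (n : nat) (f : 'rV[R]_n -> R) (e x : 'rV[R]_n) (t : R) :
  differentiable f (t *: e + x) ->
  is_derive t 1 (fun s : R => f (s *: e + x)) ('D_e f (t *: e + x)).
Proof.
move=> df.
have E : (fun h : R => h^-1 *: (((fun s : R => f (s *: e + x)) \o shift t) (h *: 1)
            - f (t *: e + x))) =
         (fun h : R => h^-1 *: ((f \o shift (t *: e + x)) (h *: e) - f (t *: e + x))).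
  apply: funext => h /=.
  by rewrite /shift /= scalerDl -addrA [h *: 1]mulr1.
apply: DeriveDef.
  by rewrite /derivable E; exact: diff_derivable.
by rewrite /derive E.
Qed.

Lemma max2 (F h : R -> R) (d r : R) : 0 < r ->
  (forall t : R, `|t| < r -> is_derive t 1 F (h t)) ->
  (forall t : R, `|t| < r -> F t <= F 0) ->
  is_derive (0:R) 1 h d -> h 0 = 0 /\ d <= 0.
Proof.
move=> r0 dF Fmax dh.
have h00 : h 0 = 0.
  have : is_derive (0:R) 1 F 0.
    apply: (@derive1_at_max _ F (- r) r 0).
    - by rewrite -subr_ge0 opprK; apply: ltW; rewrite addr_gt0.
    - move=> t; rewrite in_itv /= => /andP[t1 t2].
      have /dF [] // : `|t| < r by rewrite ltr_norml t1 t2.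
    - by rewrite in_itv /= oppr_lt0 r0.
    - move=> t; rewrite in_itv /= => /andP[t1 t2].
      by apply: Fmax; rewrite ltr_norml t1 t2.
  move=> H0; have H1 := dF 0; rewrite normr0 in H1.
  have := @derive_val _ _ _ _ _ _ _ (H1 r0).
  by rewrite (@derive_val _ _ _ _ _ _ _ H0).
split => //.
rewrite leNgt; apply/negP => d0.
have Hc : (fun s : R => s^-1 *: ((h \o shift 0) (s *: 1) - h 0)) @ 0^' --> d.
  rewrite -(@derive_val _ _ _ _ _ _ _ dh).
  exact: (@ex_derive _ _ _ _ _ _ _ dh).
have := cvgr_gt d Hc 0 d0.
rewrite near_withinE => /(_ _) /nbhs_ballP [e /= e0 He].
pose t0 := Num.min e r / 2.
have t00 : 0 < t0 by rewrite divr_gt0 // lt_min e0 r0.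
have t0e : t0 < Num.min e r by rewrite /t0 ltr_pdivrMr // ltr_pMr ?ltr1n // lt_min e0 r0.
have hpos : forall s : R, 0 < s -> s <= t0 -> 0 < h s.
  move=> s s0 st.
  have : 0 < s^-1 *: ((h \o shift 0) (s *: 1) - h 0).
    apply: He; last by rewrite gt_eqF.
    rewrite /ball /= sub0r normrN gtr0_norm //.
    by apply: (le_lt_trans st); apply: (lt_le_trans t0e); rewrite ge_min lexx.
  by rewrite /= h00 subr0 /shift /= addr0 [s *: 1]mulr1 pmulr_rgt0 // invr_gt0.
have [c cI Hmvt] : exists2 c : R, c \in `]0, t0[ & F t0 - F 0 = h c * (t0 - 0).
  apply: MVT => //.
    move=> x; rewrite in_itv /= => /andP[x0 xt]; apply: dF.
    rewrite gtr0_norm //; apply: (lt_trans xt); apply: (lt_le_trans t0e).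
    by rewrite ge_min lexx orbT.
  apply: derivable_within_continuous => x; rewrite in_itv /= => /andP[x0 xt].
  have /dF [] // : `|x| < r.
  rewrite ger0_norm //; apply: (le_lt_trans xt); apply: (lt_le_trans t0e).
  by rewrite ge_min lexx orbT.
have : 0 < F t0 - F 0.
  rewrite Hmvt subr0; apply: mulr_gt0 => //.
  by move: cI; rewrite in_itv /= => /andP[c0 ct]; apply: hpos => //; apply: ltW.
rewrite subr_gt0 ltNge Fmax //.
rewrite gtr0_norm //; apply: (lt_le_trans t0e).
by rewrite ge_min lexx orbT.
Qed.

Lemma line_max (n : nat) (u v : 'rV[R]_n -> R) (c c1 : R -> R) (c2 eta r : R)
    (x e : 'rV[R]_n) :
  0 < r ->
  (forall t : R, `|t| < r -> differentiable u (t *: e + x) /\ differentiable v (t *: e + x)) ->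
  differentiable ('D_e u) x -> differentiable ('D_e v) x ->
  (forall t : R, `|t| < r -> is_derive t 1 c (c1 t)) -> is_derive (0:R) 1 c1 c2 ->
  (forall t : R, `|t| < r ->
     u (t *: e + x) - v (t *: e + x) + eta * c t <= u x - v x + eta * c 0) ->
  'D_e u x - 'D_e v x + eta * c1 0 = 0 /\
  'D_e ('D_e u) x - 'D_e ('D_e v) x + eta * c2 <= 0.
Proof.
move=> r0 duv ddu ddv dc dc1 fmax.
pose F := (fun s : R => u (s *: e + x)) - (fun s : R => v (s *: e + x)) + eta \*: c.
pose h := (fun s : R => 'D_e u (s *: e + x)) - (fun s : R => 'D_e v (s *: e + x)) + eta \*: c1.
have x0 : 0 *: e + x = x by rewrite scale0r add0r.
suff [] : h 0 = 0 /\ ('D_e ('D_e u) x - 'D_e ('D_e v) x + eta *: c2) <= 0.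
  have -> : h 0 = 'D_e u (0 *: e + x) - 'D_e v (0 *: e + x) + eta * c1 0 by [].
  by rewrite x0 => -> ->.
refine (@max2 F h _ r r0 _ _ _).
- move=> t tr; have [du dv] := duv t tr.
  suff : is_derive t 1 F ('D_e u (t*:e+x) - 'D_e v (t *: e + x) + eta *: c1 t) by [].
  apply: is_deriveD; last exact: is_deriveZ (dc t tr).
  by apply: is_deriveB; exact: line_derive.
- move=> t tr; have := fmax t tr.
  have -> : F t = u (t *: e + x) - v (t *: e + x) + eta * c t by [].
  have -> : F 0 = u (0 *: e + x) - v (0 *: e + x) + eta * c 0 by [].
  by rewrite x0.
- rewrite /h; apply: is_deriveD.
  apply: is_deriveB.
    have := @line_derive n ('D_e u) e x 0; rewrite x0; apply; exact: ddu.
  have := @line_derive n ('D_e v) e x 0; rewrite x0; apply; exact: ddv.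
Qed.

Lemma exp_line (a k t : R) :
  is_derive t 1 (fun s : R => expR (a * s + k)) (a * expR (a * t + k)).
Proof.
have dl : is_derive t 1 (fun s : R => a * s + k) a.
  have -> : (fun s : R => a * s + k) = a \*: (@id R) + cst k.
    by apply: funext => s.
  have H : is_derive t 1 (a \*: (@id R) + cst k) (a *: (1:R) + 0) by apply: is_deriveD.
  by rewrite addr0 [a *: 1]mulr1 in H.
have := @is_derive1_comp R expR (fun s : R => a * s + k) t (expR (a * t + k)) a _ dl.
by move=> /(_ (is_derive_expR _)); rewrite [expR _ * a]mulrC.
Qed.

Lemma coord_le_enorm n (y : 'rV[R]_n) (i : 'I_n) : `|y 0 i| <= enorm y.
Proof.
rewrite -sqrtr_sqr /enorm /dotv ler_sqrt; last first.
  by apply: sumr_ge0 => j _; rewrite -expr2 sqr_ge0.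
rewrite (bigD1 i) //= expr2 lerDl; apply: sumr_ge0 => j _.
by rewrite -expr2 sqr_ge0.
Qed.

Definition box n (b : R) : set 'rV[R]_n :=
  [set y | forall i, `[- b, b]%classic (y ord0 i)].

Lemma box_compact n b : compact (box n b).
Proof. by apply: (@rV_compact _ _ (fun=> `[- b, b]%classic)) => _; exact: segment_compact. Qed.

Lemma boxP n b (y : 'rV[R]_n) : box n b y <-> forall i, `|y 0 i| <= b.
Proof.
split => H i; first by have := H i; rewrite /= in_itv /= -ler_norml.
by rewrite /= in_itv /= -ler_norml; exact: H.
Qed.

Lemma closure_box n (U : set 'rV[R]_n) b :
  (forall y, U y -> forall i, `|y 0 i| <= b) -> closure U `<=` box n b.
Proof.
move=> HU.
have cb : closed (box n b) by apply: compact_closed; [exact: norm_hausdorff | exact: box_compact].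
rewrite [X in _ `<=` X](closure_id _).1 //.
apply: closure_subset => y Uy; apply/boxP; exact: HU.
Qed.

Lemma arith_box (b c s d B : R) : (b = 0 \/ b = 1) -> 0 < c -> c < s -> s <= 1 ->
  `|d| <= B -> `|c * b + (d - s * b)| <= B + 1.
Proof.
move=> hb c0 cs s1; rewrite !ler_norml => /andP [h1 h2].
by case: hb => ->; rewrite ?mulr0 ?mulr1; apply/andP; split; lra.
Qed.

Lemma final_arith (eps lu lv Dc s C Q : R) : 0 < eps -> eps * lv - eps * lu = Dc * s ->
  lu - lv <= - Q -> Dc <= C -> 0 < s -> eps * Q <= C * s.
Proof.
move=> e0 E L D s0.
have h1 : eps * Q <= eps * (lv - lu) by rewrite ler_pM2l //; lra.
have h2 : Dc * s <= C * s by rewrite ler_pM2r.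
rewrite mulrBr in h1; lra.
Qed.

Lemma comp_le (m : nat) (U : set 'rV[R]_(1 + m)) (H : 'rV[R]_(1 + m) -> R)
    (eps : R) (u v : 'rV[R]_(1 + m) -> R) :
  open U -> (exists M : R, forall x, U x -> enorm x <= M) -> smooth H -> 0 < eps ->
  classical_solution U H eps u -> classical_solution U H eps v ->
  forall x, closure U x -> u x <= v x.
Proof.
move=> oU [Mb HMb] sH eps0 [[du ddu] [ccu [equ bu]]] [[dv ddv] [ccv [eqv bv]]] x0 x0U.
rewrite leNgt; apply/negP => vu0.
pose M0 := u x0 - v x0.
have M0p : 0 < M0 by rewrite subr_gt0.
have Hbox : closure U `<=` box (1 + m) Mb.
  apply: closure_box => y Uy i; apply: le_trans (HMb y Uy); exact: coord_le_enorm.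
have Hb y : closure U y -> forall i, `|y 0 i| <= Mb by move/Hbox/boxP.
have cU : compact (closure U).
  exact: subclosed_compact (@closed_closure _ U) (box_compact _ Mb) Hbox.
pose g := u - v.
have cg : {within closure U, continuous g} by exact: within_continuousB.
pose K := [set y | closure U y /\ M0 / 2 <= g y].
have KU : K `<=` U.
  move=> y [cy gy]; have [//|nUy] := pselect (U y).
  have gE : g y = u y - v y by [].
  move: gy; rewrite gE bu // bv // subrr => gy.
  have : 0 < M0 / 2 by rewrite divr_gt0.
  by rewrite ltNge gy.
have gE y : g y = u y - v y by [].
have x0K : K x0 by split => //; rewrite gE ler_pdivrMr // ler_pMr // ler1n.
have cK : compact K.
  apply: (subclosed_compact _ cU) => [|y []//].
  have -> : K = (g @^-1` `[M0 / 2, +oo[) `&` closure U.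
    apply/seteqP; split => y /=.
      by move=> [cy gy]; split => //; rewrite in_itv /= gy.
    by rewrite in_itv /= andbT => -[gy cy].
  rewrite closed_setIS; last exact: closed_closure.
  apply: preimage_closed; last exact: rray_closed.
  by move=> y _; exact: cg.
have Bi : forall i : 'I_(1 + m), exists B : R,
    0 <= B /\ forall y, K y -> `|'D_(evec R i) v y| <= B.
  move=> i.
  have K0 : K !=set0 by exists x0.
  have cf : {within K, continuous (fun y => `|'D_(evec R i) v y|)}.
    apply: continuous_in_subspaceT => y; rewrite inE => Ky.
    apply: (@continuous_comp _ _ _ ('D_(evec R i) v) Num.Def.normr).
      exact: differentiable_continuous ((ddv (evec R i)).1 y (KU y Ky)).
    exact: norm_continuous.
  have [c cK' Hc] := EVT_max_rV K0 cK cf.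
  by exists `|'D_(evec R i) v c|; split => // y Ky; apply: Hc; rewrite inE.
have [Bf HBf] := choice Bi.
pose B := \sum_i Bf i.
have B0 : 0 <= B by apply: sumr_ge0 => j _; exact: (HBf j).1.
have HB : forall y, K y -> forall i, `|'D_(evec R i) v y| <= B.
  move=> y Ky i; apply: le_trans ((HBf i).2 y Ky) _.
  rewrite /B (bigD1 i) //= lerDl; apply: sumr_ge0 => j _; exact: (HBf j).1.
have [C HC] : exists C : R, forall p, box (1 + m) (B + 1) p -> `|'D_(evec R ord0) H p| <= C.
  have Q0 : box (1 + m) (B + 1) !=set0.
    exists 0; apply/boxP => i; rewrite mxE normr0 addr_ge0 //.
  have cf : {within box (1 + m) (B + 1), continuous (fun p => `|'D_(evec R ord0) H p|)}.
    apply: continuous_subspaceT => p.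
    apply: (@continuous_comp _ _ _ ('D_(evec R ord0) H) Num.Def.normr).
      exact: ((sH 1%N).2 (evec R ord0)).
    exact: norm_continuous.
  have [c _ Hc] := EVT_max_rV Q0 (box_compact _ _) cf.
  by exists `|'D_(evec R ord0) H c| => p Qp; apply: Hc; rewrite inE.
have C0 : 0 <= C.
  apply: le_trans (HC 0 _); first exact: normr_ge0.
  by apply/boxP => i; rewrite mxE normr0 addr_ge0.
pose lam := C / eps + 1.
have lam0 : 0 < lam by rewrite /lam ltr_wpDl // divr_ge0 // ltW.
have epslam : C < eps * lam.
  by rewrite /lam mulrDr mulr1 mulrC divfK ?gt_eqF // ltrDl.
pose E0 := expR (lam * Mb).
have E00 : 0 < E0 := expR_gt0 _.
pose D := lam + 2 / M0 + 1.
have D0 : 0 < D by rewrite /D addr_gt0 // addr_gt0 // divr_gt0.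
pose eta := (E0 * D)^-1.
have eta0 : 0 < eta by rewrite invr_gt0 mulr_gt0.
have etaE : eta * E0 = D^-1 by rewrite /eta invfM mulrAC mulVf ?gt_eqF // mul1r.
have etaE0 : eta * E0 < M0 / 2.
  rewrite etaE -(@ltr_pM2l _ D) // mulfV ?gt_eqF // /D.
  rewrite mulrDl mulrDl; have -> : 2 / M0 * (M0 / 2) = 1 by rewrite mulrA divfK ?gt_eqF // divff.
  have : 0 < lam * (M0 / 2) by rewrite mulr_gt0 // divr_gt0.
  have : 0 < M0 / 2 by rewrite divr_gt0.
  rewrite mul1r; lra.
have etalam : eta * lam * E0 <= 1.
  rewrite mulrAC etaE -(@ler_pM2l _ D) // mulrA mulfV ?gt_eqF // mul1r mulr1.
  rewrite /D; have : 0 < 2 / M0 by rewrite divr_gt0.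
  lra.
pose phi := fun y : 'rV[R]_(1 + m) => expR (lam * y 0 0).
have phi0 y : 0 < phi y by exact: expR_gt0.
have phiE y : closure U y -> phi y <= E0.
  move=> cy; rewrite /phi /E0 ler_expR ler_pM2l //.
  exact: le_trans (ler_norm _) (Hb y cy 0).
pose f := g + (fun y => eta * phi y).
have fE y : f y = u y - v y + eta * phi y by [].
have cf : {within closure U, continuous f}.
  apply: within_continuousD => //; apply: continuous_subspaceT => y.
  apply: (@continuous_comp _ _ _ (fun y : 'rV[R]_(1 + m) => lam * y 0 0) (fun t => eta * expR t)).
    exact: (cvgM (cvg_cst lam) (@coord_continuous _ _ _ 0 0 y)).
  exact: (cvgM (cvg_cst eta) (@continuous_expR _ _)).
have [x xU fmax] := EVT_max_rV (ex_intro _ x0 x0U) cU cf.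
move: xU; rewrite inE => xU.
have fx : M0 <= f x.
  apply: le_trans (fmax x0 _); last by rewrite inE.
  by rewrite fE -/M0 lerDl ltW // mulr_gt0.
have Ux : U x.
  have [//|nUx] := pselect (U x).
  move: fx; rewrite fE bu // bv // subrr add0r => fx.
  have HH : eta * phi x <= eta * E0 by rewrite ler_pM2l // phiE.
  have : M0 / 2 < M0 by rewrite ltr_pdivrMr // ltr_pMr // ltr1n.
  lra.
have Kx : K x.
  split => //; rewrite gE.
  have HH : eta * phi x <= eta * E0 by rewrite ler_pM2l // phiE.
  rewrite fE in fx.
  lra.
have Hline : forall e : 'rV[R]_(1 + m), exists2 r : R, 0 < r &
    forall t : R, `|t| < r -> U (t *: e + x).
  move=> e.
  have cl : {for 0, continuous (fun t : R => t *: e + x)}.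
    exact: (cvgD (@scalel_continuous _ _ e 0) (cvg_cst x)).
  have nU : nbhs ((fun t : R => t *: e + x) 0) U by rewrite /= scale0r add0r; exact: oU.
  have /nbhs_ballP [r /= r0 Hr] := cl _ nU.
  exists r => // t tr; apply: Hr; rewrite /ball /= sub0r normrN //.
have Hi : forall i : 'I_(1 + m),
  'D_(evec R i) u x - 'D_(evec R i) v x + eta * (lam * evec R i 0 0 * phi x) = 0 /\
  'D_(evec R i) ('D_(evec R i) u) x - 'D_(evec R i) ('D_(evec R i) v) x
     + eta * (lam * evec R i 0 0 * (lam * evec R i 0 0 * phi x)) <= 0.
  move=> i; set a := lam * evec R i 0 0.
  have [r r0 Hr] := Hline (evec R i).
  pose c := fun t : R => expR (a * t + lam * x 0 0).
  have c0 : c 0 = phi x by rewrite /c mulr0 add0r.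
  rewrite -c0.
  apply: (@line_max _ u v c (a \*: c) (a *: (a * c 0)) eta r x (evec R i) r0).
  - by move=> t tr; split; [apply: du | apply: dv]; exact: Hr.
  - exact: (ddu (evec R i)).1 x Ux.
  - exact: (ddv (evec R i)).1 x Ux.
  - by move=> t _; exact: exp_line.
  - exact: is_deriveZ (exp_line a _ 0).
  - move=> t tr.
    have := fmax (t *: evec R i + x); rewrite !fE c0.
    have -> : phi (t *: evec R i + x) = c t.
      by rewrite /phi /c /a !mxE; congr expR; ring.
    apply; rewrite inE; exact: subset_closure (Hr t tr).
pose s := eta * lam * phi x.
have s0 : 0 < s by rewrite mulr_gt0 // mulr_gt0.
have s1 : s <= 1.
  apply: le_trans etalam; rewrite /s ler_pM2l ?mulr_gt0 //; exact: phiE.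
have gradE : grad u x = grad v x - s *: evec R ord0.
  apply/rowP => j; rewrite !mxE.
  have := (Hi j).1; rewrite !mxE /s eq_sym.
  case: (j == 0) => /=; rewrite ?mulr1 ?mulr0 ?mul0r; lra.
have lapI : lap u x - lap v x <= - (eta * (lam * (lam * phi x))).
  rewrite /lap -sumrB.
  have Hj : forall j : 'I_(1 + m),
      'D_(evec R j) ('D_(evec R j) u) x - 'D_(evec R j) ('D_(evec R j) v) x <=
      - (eta * (lam * evec R j 0 0 * (lam * evec R j 0 0 * phi x))).
    by move=> j; rewrite -subr_le0 opprK; exact: (Hi j).2.
  apply: le_trans (ler_sum _ (fun j _ => Hj j)) _.
  rewrite (bigD1 ord0) //= [evec R ord0 0 0]mxE eqxx mulr1 -[X in _ <= X]addr0 lerD2l.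
  apply: sumr_le0 => j _; rewrite oppr_le0; apply: mulr_ge0; first exact: ltW.
  by rewrite mulrA mulr_ge0 ?(ltW (phi0 x)) // -expr2 sqr_ge0.
have equx := equ x Ux.
have eqvx := eqv x Ux.
pose k := fun t : R => H (t *: evec R ord0 + grad u x).
have dk : forall t : R, is_derive t 1 k ('D_(evec R ord0) H (t *: evec R ord0 + grad u x)).
  by move=> t; apply: line_derive; exact: ((sH 1%N).1 _ Logic.I).
have [c cI Hmv] : exists2 c : R, c \in `]0, s[ & k s - k 0 =
    'D_(evec R ord0) H (c *: evec R ord0 + grad u x) * (s - 0).
  apply: (@MVT R k (fun t => 'D_(evec R ord0) H (t *: evec R ord0 + grad u x)) 0 s s0).
  by apply: derivable_within_continuous => t tI; case: (dk t).
have ks : k s = H (grad v x) by rewrite /k gradE addrC subrK.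
have k0 : k 0 = H (grad u x) by rewrite /k scale0r add0r.
have Hbox' : box (1 + m) (B + 1) (c *: evec R ord0 + grad u x).
  apply/boxP => j; rewrite gradE !mxE.
  move: cI; rewrite in_itv /= => /andP [c0 cs].
  apply: arith_box => //; last exact: HB x Kx j.
  by case: (j == 0); [right | left].
have HCc := HC _ Hbox'.
have HDc : 'D_(evec R ord0) H (c *: evec R ord0 + grad u x) <= C.
  exact: le_trans (ler_norm _) HCc.
have key : eps * lam * s <= C * s.
  have -> : eps * lam * s = eps * (eta * (lam * (lam * phi x))) by rewrite /s; ring.
  move: Hmv; rewrite ks k0 subr0 equx eqvx => Hmv.
  exact: (@final_arith _ _ _ _ _ _ _ eps0 Hmv lapI HDc s0).
move: key; rewrite ler_pM2r // => key.
have := lt_le_trans epslam key; by rewrite ltxx.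
Qed.
End Aux.

Theorem theorem6 (R : realType) (m : nat) (U : set 'rV[R]_(1 + m))
    (H : 'rV[R]_(1 + m) -> R) (gamma delta eps : R)
    (u v : 'rV[R]_(1 + m) -> R) :
  smooth_bounded_domain U ->
  smooth H -> H 0 < 0 -> superlinear H ->
  0 < gamma -> 0 < delta ->
  (forall p, delta <= dotv (grad H p) p - gamma * H p) ->
  0 < eps ->
  classical_solution U H eps u ->
  classical_solution U H eps v ->
  forall x, closure U x -> u x = v x.
Proof.
move=> [oU [_ [bU _]]] sH _ _ _ _ _ eps0 solu solv x xU.
apply/eqP; rewrite eq_le; apply/andP; split.
  exact: (@comp_le R m U H eps u v oU bU sH eps0 solu solv x xU).
exact: (@comp_le R m U H eps v u oU bU sH eps0 solv solu x xU).
Qed.
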